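(* Let $I$ be a stable matching instance with $k$-range preferences and $n$ men and $n$ women, and let $G(I)$ be the rotation digraph of $I$. Suppose $(\rho, \sigma)$ is a directed edge in $G(I)$. Then there exists $i \in [n]$ such that $i \in \mathrm{ext}(\rho) \cap \mathrm{ext}(\sigma)$.
   Context: An SM instance $I$ has men and women with complete strict preference lists; $P_a(b)$ is the rank $a$ assigns $b$. For an agent $a$, $\min\mathrm{rank}(a)$ and $\max\mathrm{rank}(a)$ are the minimum and maximum of $P_b(a)$ over agents $b$ of the opposite sex; $I$ has $k$-range preferences if $\max\mathrm{rank}(a) - \min\mathrm{rank}(a) \leq k-1$ for all $a$. A rotation is a circular list $(m_1,w_1),\ldots,(m_\ell,w_\ell)$ of pairs of some stable matching $\mu$ such that $w_{i+1}$ is the first woman after $w_i$ on $m_i$'s list who prefers $m_i$ to her partner $m_{i+1}$ in $\mu$; eliminating it matches $m_i$ to $w_{i+1}$ (''moves $m_i$ down to $w_{i+1}$'', moving $m_i$ below any woman strictly between $w_i,w_{i+1}$ on his list; it moves $w_i$ up to $m_{i-1}$, above any man strictly between). The rotation digraph $G(I)$ (computed by Gusfield's algorithm) is a DAG on the rotations whose transitive closure is the rotation poset, with an edge $(\rho',\rho)$ exactly when (Rule 1) $(m,w)$ is in $\rho$ and $\rho'$ is the rotation that moves $m$ to $w$, or (Rule 2) $(m,w)$ is not in $\rho$, $\rho'\ne\rho$ is the rotation moving $w$ above $m$ and $\rho$ is the rotation moving $m$ below $w$. For a rotation $\rho$, $\mathrm{ext}(\rho) = [\min\mathrm{rank}_{\min}(\rho)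 - 2k+1, \min\mathrm{rank}_{\max}(\rho) + 2k-1]$, where $\min\mathrm{rank}_{\min}(\rho)$ and $\min\mathrm{rank}_{\max}(\rho)$ are the minimum and maximum of $\min\mathrm{rank}(a)$ over agents $a$ appearing in $\rho$. *)

(* Defs.v *)
From mathcomp Require Import all_boot all_order all_algebra all_fingroup.
Set Implicit Arguments. Unset Strict Implicit. Unset Printing Implicit Defensive.
Import Order.TTheory GRing.Theory Num.Theory.

(* An SM instance with n men and n women, both indexed by 'I_n.
   [pm m] : {perm 'I_n} maps a woman w to (P_m(w) - 1), i.e. man m's
   (complete, strict) preference list; [pw w] likewise for woman w.
   Ranks P_a(b) are 1-based: P_m(w) = (pm m w).+1.  Smaller rank = preferred. *)
Definition prefs (n : nat) := 'I_n -> {perm 'I_n}.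

(* agents: inl m = man m, inr w = woman w *)
Definition agent (n : nat) := ('I_n + 'I_n)%type.

Definition minrank n (pm pw : prefs n) (a : agent n) : nat :=
  match a with
  | inl m => \big[minn/n]_(w : 'I_n) (pw w m).+1
  | inr w => \big[minn/n]_(m : 'I_n) (pm m w).+1
  end.

Definition maxrank n (pm pw : prefs n) (a : agent n) : nat :=
  match a with
  | inl m => \max_(w : 'I_n) (pw w m).+1
  | inr w => \max_(m : 'I_n) (pm m w).+1
  end.

Definition k_range n (pm pw : prefs n) (k : nat) : Prop :=
  forall a : agent n, (maxrank pm pw a < minrank pm pw a + k)%N.

(* A perfect matching is a permutation mu: man m is matched to woman mu m,
   woman w to man mu^-1 w. *)
Definition stable n (pm pw : prefs n) (mu : {perm 'I_n}) : Prop :=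
  forall (m w : 'I_n),
    ~ ((pm m w < pm m (mu m))%N /\ (pw w m < pw w ((mu^-1)%g w))%N).

(* w' is the first woman after mu(m) on m's list who prefers m to her
   partner, and that partner is m'. *)
Definition is_next n (pm pw : prefs n) (mu : {perm 'I_n}) (m w' m' : 'I_n) : Prop :=
  [/\ mu m' = w',
      (pm m (mu m) < pm m w')%N,
      (pw w' m < pw w' m')%N &
      forall w'' : 'I_n,
        (pm m (mu m) < pm m w'')%N -> (pm m w'' < pm m w')%N ->
        ~ (pw w'' m < pw w'' ((mu^-1)%g w''))%N].

Definition consec n (r : seq ('I_n * 'I_n)) : seq (('I_n * 'I_n) * ('I_n * 'I_n)) :=
  zip r (rot 1 r).

Definition exposed n (pm pw : prefs n) (mu : {perm 'I_n}) (r : seq ('I_n * 'I_n)) : Prop :=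
  [/\ r != [::], uniq r,
      (forall p, p \in r -> mu p.1 = p.2) &
      (forall q, q \in consec r -> is_next pm pw mu q.1.1 q.2.2 q.2.1)].

Definition is_rotation n (pm pw : prefs n) (r : seq ('I_n * 'I_n)) : Prop :=
  exists mu : {perm 'I_n}, stable pm pw mu /\ exposed pm pw mu r.

Definition same_rot n (r r' : seq ('I_n * 'I_n)) : Prop :=
  exists j, r' = rot j r.

(* r moves m (down) to w : m = m_i and w = w_{i+1} *)
Definition moves_to n (r : seq ('I_n * 'I_n)) (m w : 'I_n) : Prop :=
  exists2 q, q \in consec r & q.1.1 = m /\ q.2.2 = w.

(* r moves m below w : m = m_i and w strictly between w_i and w_{i+1}
   on m's list *)
Definition moves_below n (pm : prefs n) (r : seq ('I_n * 'I_n)) (m w : 'I_n) : Prop :=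
  exists2 q, q \in consec r &
    [/\ q.1.1 = m, (pm m q.1.2 < pm m w)%N & (pm m w < pm m q.2.2)%N].

(* r moves w above m : w = w_{i+1} moves from m_{i+1} up to m_i, and m is
   strictly between m_i and m_{i+1} on w's list *)
Definition moves_above n (pw : prefs n) (r : seq ('I_n * 'I_n)) (w m : 'I_n) : Prop :=
  exists2 q, q \in consec r &
    [/\ q.2.2 = w, (pw w q.1.1 < pw w m)%N & (pw w m < pw w q.2.1)%N].

Definition rot_edge n (pm pw : prefs n) (r' r : seq ('I_n * 'I_n)) : Prop :=
  [/\ is_rotation pm pw r', is_rotation pm pw r &
      (exists m w : 'I_n, (m, w) \in r /\ moves_to r' m w)
   \/ (exists m w : 'I_n, [/\ (m, w) \notin r, ~ same_rot r r',
                             moves_above pw r' w m & moves_below pm r m w])].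

Definition minrank_min n (pm pw : prefs n) (r : seq ('I_n * 'I_n)) : nat :=
  \big[minn/n]_(p <- r) minn (minrank pm pw (inl p.1)) (minrank pm pw (inr p.2)).

Definition minrank_max n (pm pw : prefs n) (r : seq ('I_n * 'I_n)) : nat :=
  \max_(p <- r) maxn (minrank pm pw (inl p.1)) (minrank pm pw (inr p.2)).

Definition in_ext n (pm pw : prefs n) (k : nat) (r : seq ('I_n * 'I_n)) (i : nat) : bool :=
  ((((minrank_min pm pw r)%:Z - (2 * k)%:Z + 1 <= i%:Z)%R)
   && ((i%:Z <= (minrank_max pm pw r)%:Z + (2 * k)%:Z - 1)%R)).

(* Main.v *)
Require Import Defs.
From mathcomp Require Import all_boot all_order all_algebra all_fingroup.
From mathcomp Require Import zify.

Lemma count_iota_lt B n : count (fun i => i < B) (iota 0 n) = minn B n.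
Proof.
elim: n => [|n IH]; first by rewrite minn0.
rewrite -addn1 iotaD count_cat IH /= add0n addn0.
case: (ltnP n B) => h /=; rewrite /minn; case: ifP => /= ?; lia.
Qed.

Lemma card_lt n B : #|[set j : 'I_n | (j < B)%N]| = minn B n.
Proof.
rewrite cardsE cardE /enum_mem size_filter -enumT.
rewrite -(count_map val (fun i => i < B)) val_enum_ord.
by rewrite count_iota_lt.
Qed.

Lemma card_perm_lt n (g : {perm 'I_n}) B : #|[set j | (g j < B)%N]| = minn B n.
Proof.
rewrite -card_lt -[RHS](card_preimset _ (@perm_inj _ g)).
by apply: eq_card => j; rewrite !inE.
Qed.

Lemma bigmin_seq_le (T : eqType) (r : seq T) (F : T -> nat) d x :
  x \in r -> \big[minn/d]_(i <- r) F i <= F x.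
Proof.
elim: r => [|y r IH] //; rewrite big_cons in_cons; case/orP => [/eqP->|/IH h].
  exact: geq_minl.
exact: leq_trans (geq_minr _ _) h.
Qed.

Lemma bigmin_le_d (T : eqType) (r : seq T) (F : T -> nat) d :
  \big[minn/d]_(i <- r) F i <= d.
Proof.
elim: r => [|y r IH]; first by rewrite big_nil.
by rewrite big_cons; exact: leq_trans (geq_minr _ _) IH.
Qed.

Lemma bigmin_pos (T : eqType) (r : seq T) (F : T -> nat) d :
  0 < d -> (forall i, 0 < F i) -> 0 < \big[minn/d]_(i <- r) F i.
Proof.
move=> hd hF; elim: r => [|y r IH]; first by rewrite big_nil.
by rewrite big_cons leq_min hF IH.
Qed.

Lemma mem_zip_l (S T : eqType) (s : seq S) (t : seq T) q :
  q \in zip s t -> q.1 \in s /\ q.2 \in t.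
Proof.
elim: s t => [|x s IH] [|y t] //=; rewrite in_cons; case/orP => [/eqP->|/IH[h1 h2]].
  by rewrite /= !in_cons !eqxx.
by rewrite !in_cons h1 h2 !orbT.
Qed.

Lemma mem_consec n (r : seq ('I_n * 'I_n)) q :
  q \in consec r -> q.1 \in r /\ q.2 \in r.
Proof. by move/mem_zip_l => [h1]; rewrite mem_rot => h2. Qed.

Section S.
Variables (n : nat) (pm pw : prefs n).

Lemma mr_m_le (m w : 'I_n) : minrank pm pw (inl m) <= (pw w m).+1.
Proof. by rewrite /=; apply: bigmin_seq_le; rewrite mem_index_enum. Qed.

Lemma mr_w_le (m w : 'I_n) : minrank pm pw (inr w) <= (pm m w).+1.
Proof. by rewrite /=; apply: bigmin_seq_le; rewrite mem_index_enum. Qed.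

Lemma mr_m_kr k (m w : 'I_n) : k_range pm pw k -> (pw w m).+1 < minrank pm pw (inl m) + k.
Proof.
move/(_ (inl m)) => /= h; apply: leq_ltn_trans h.
exact: (leq_bigmax (F := fun w => (pw w m).+1) w).
Qed.

Lemma mr_w_kr k (m w : 'I_n) : k_range pm pw k -> (pm m w).+1 < minrank pm pw (inr w) + k.
Proof.
move/(_ (inr w)) => /= h; apply: leq_ltn_trans h.
exact: (leq_bigmax (F := fun m => (pm m w).+1) m).
Qed.

Lemma mr_range a : 0 < n -> 0 < minrank pm pw a <= n.
Proof.
move=> hn; case: a => x /=; apply/andP; split;
  (apply: bigmin_pos => //) || exact: bigmin_le_d.
Qed.

Lemma dir1 k (nu : {perm 'I_n}) (m w : 'I_n) :
  k_range pm pw k -> stable pm pw nu -> pw w m < pw w ((nu^-1)%g w) ->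
  minrank pm pw (inl m) + 2 <= minrank pm pw (inr w) + 2 * k.
Proof.
move=> kr st hlt.
set S := [set m' | pw w m' < (pw w m).+1].
set T := [set w' | pm m w' < minrank pm pw (inr w) + 2 * k - 2].
have cS : #|S| = (pw w m).+1.
  by rewrite card_perm_lt; apply/minn_idPl; exact: ltn_ord.
have sub : nu @: S \subset T.
  apply/subsetP => _ /imsetP[m' Hm' ->]; rewrite inE in Hm'; rewrite /T inE.
  have h1 : pm m' (nu m') <= pm m' w.
    rewrite leqNgt; apply/negP => h; apply: (st m' w); split => //; lia.
  have h2 := mr_w_le m' (nu m').
  have h3 := mr_w_kr k m' w kr.
  have h4 := mr_w_kr k m (nu m') kr.
  lia.
have := subset_leq_card sub; rewrite card_imset; last exact: perm_inj.
rewrite cS card_perm_lt => h.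
have h5 := leq_trans h (geq_minl _ _).
have := mr_m_le m w; lia.
Qed.

Lemma dir2 k (mu : {perm 'I_n}) (m w w2 : 'I_n) :
  k_range pm pw k -> stable pm pw mu -> pm m w < pm m w2 ->
  (forall w'', pm m (mu m) < pm m w'' -> pm m w'' < pm m w2 ->
       ~ (pw w'' m < pw w'' ((mu^-1)%g w''))) ->
  minrank pm pw (inr w) + 2 <= minrank pm pw (inl m) + 2 * k.
Proof.
move=> kr st hlt nx.
set S := [set w' | pm m w' < (pm m w).+1].
set T := [set m' | pw w m' < minrank pm pw (inl m) + 2 * k - 2].
have cS : #|S| = (pm m w).+1.
  by rewrite card_perm_lt; apply/minn_idPl; exact: ltn_ord.
have sub : (mu^-1)%g @: S \subset T.
  apply/subsetP => _ /imsetP[w' Hw' ->]; rewrite inE in Hw'; rewrite /T inE.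
  have h1 : pw w' ((mu^-1)%g w') <= pw w' m.
    case: (ltngtP (pm m w') (pm m (mu m))) => h.
    - rewrite leqNgt; apply/negP => h'; exact: (st m w') (conj h h').
    - rewrite leqNgt; apply/negP; apply: nx => //; lia.
    - have -> : w' = mu m by apply: (@perm_inj _ (pm m)); apply: val_inj; rewrite /= h.
      by rewrite permK.
  have h2 := mr_m_le ((mu^-1)%g w') w'.
  have h3 := mr_m_kr k m w' kr.
  have h4 := mr_m_kr k ((mu^-1)%g w') w kr.
  lia.
have := subset_leq_card sub; rewrite card_imset; last exact: perm_inj.
rewrite cS card_perm_lt => h.
have h5 := leq_trans h (geq_minl _ _).
have := mr_w_le m w; lia.
Qed.

Lemma mm_le r p : p \in r ->
  minrank_min pm pw r <= minrank pm pw (inl p.1) /\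
  minrank_min pm pw r <= minrank pm pw (inr p.2).
Proof.
move=> hp; have := @bigmin_seq_le _ r
  (fun p : 'I_n * 'I_n => minn (minrank pm pw (inl p.1)) (minrank pm pw (inr p.2))) n p hp.
move=> h; split; apply: leq_trans h _; [exact: geq_minl | exact: geq_minr].
Qed.

Lemma MM_ge r p : p \in r ->
  minrank pm pw (inl p.1) <= minrank_max pm pw r /\
  minrank pm pw (inr p.2) <= minrank_max pm pw r.
Proof.
move=> hp; have := @leq_bigmax_seq _ r xpredT
  (fun p : 'I_n * 'I_n => maxn (minrank pm pw (inl p.1)) (minrank pm pw (inr p.2))) p hp erefl.
move=> h; split; apply: leq_trans _ h; [exact: leq_maxl | exact: leq_maxr].
Qed.

Lemma assemble k rho sigma A B :
  minrank_min pm pw rho <= A <= minrank_max pm pw rho ->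
  minrank_min pm pw sigma <= B <= minrank_max pm pw sigma ->
  0 < A <= n -> 0 < B <= n -> A + 1 <= B + 2 * k -> B + 1 <= A + 2 * k ->
  exists i : nat, [/\ (1 <= i <= n)%N, in_ext pm pw k rho i & in_ext pm pw k sigma i].
Proof.
move=> /andP[h1 h2] /andP[h3 h4] /andP[h5 h6] /andP[h7 h8] h9 h10.
case: (leqP A B) => h.
  exists A; split; first by rewrite h5 h6.
    by rewrite /in_ext; apply/andP; split; lia.
  by rewrite /in_ext; apply/andP; split; lia.
exists B; split; first by rewrite h7 h8.
  by rewrite /in_ext; apply/andP; split; lia.
by rewrite /in_ext; apply/andP; split; lia.
Qed.

End S.

Theorem lemma7p8 (n k : nat) (pm pw : prefs n) (rho sigma : seq ('I_n * 'I_n)) :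
  k_range pm pw k ->
  rot_edge pm pw rho sigma ->
  exists i : nat, [/\ (1 <= i <= n)%N, in_ext pm pw k rho i & in_ext pm pw k sigma i].
Proof.
move=> kr [[mu1 [st1 ex1]] [mu2 [st2 ex2]] H].
case: ex1 => ne1 _ _ nx1; case: ex2 => ne2 _ _ nx2.
have hn : 0 < n.
  by case: rho ne1 {nx1 H} => [|p r] // _; exact: leq_ltn_trans (leq0n _) (ltn_ord p.1).
have hk : 0 < k.
  case: rho ne1 {nx1 H} => [|p r] // _.
  have := @mr_m_kr _ pm pw k p.1 p.1 kr; have := @mr_m_le _ pm pw p.1 p.1; lia.
case: H => [[m [w [mw mv]]] | [m [w [_ _ ma mb]]]].
  case: mv => q /mem_consec[q1 _] [e1 _].
  have [a1 _] := @mm_le _ pm pw _ _ q1; have [a2 _] := @MM_ge _ pm pw _ _ q1.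
  have [b1 _] := @mm_le _ pm pw _ _ mw; have [b2 _] := @MM_ge _ pm pw _ _ mw.
  rewrite e1 /= in a1 a2.
  have hr := @mr_range _ pm pw (inl m) hn.
  apply: (@assemble _ pm pw k rho sigma (minrank pm pw (inl m)) (minrank pm pw (inl m))) => //;
    try (apply/andP; split => //); lia.
case: ma => q hq [e1 e2 e3].
have [_ q2] := @mem_consec _ _ _ hq.
case: (nx1 q hq) => f1 _ _ _.
have hinv : (mu1^-1)%g w = q.2.1 by rewrite -e1 -f1 permK.
have d1 := @dir1 _ pm pw k mu1 m w kr st1 ltac:(by rewrite hinv).
case: mb => q' hq' [e1' e2' e3'].
have [q1' _] := @mem_consec _ _ _ hq'.
case: (nx2 q' hq') => _ _ _ f4.
rewrite e1' in f4.
have d2 := @dir2 _ pm pw k mu2 m w _ kr st2 e3' f4.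
have [_ a1] := @mm_le _ pm pw _ _ q2; have [_ a2] := @MM_ge _ pm pw _ _ q2.
have [b1 _] := @mm_le _ pm pw _ _ q1'; have [b2 _] := @MM_ge _ pm pw _ _ q1'.
rewrite e1 in a1 a2; rewrite e1' in b1 b2.
have hr1 := @mr_range _ pm pw (inr w) hn.
have hr2 := @mr_range _ pm pw (inl m) hn.
apply: (@assemble _ pm pw k rho sigma (minrank pm pw (inr w)) (minrank pm pw (inl m))) => //;
  try (apply/andP; split => //); lia.
Qed.
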